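(* Let $\Gamma$ be an elliptic graph, $v_0$ an end-vertex of $\Gamma$, and let $\Gamma_{new}$ be obtained from $\Gamma$ by attaching new vertices $v_1,\dots,v_s$ ($s\ge1$), each joined by a single edge to $v_0$ only, such that $\Gamma_{new}$ is an elliptic graph. Let $\check\ell\in Supp(\check P_0^\Gamma)$ and suppose $\Pi:=\{x\in Supp(\check P_0^{\Gamma_{new}}):\check\pi_{(\Gamma,\Gamma_{new})}(x)=\check\ell\}$ is nonempty. Then $$\sum_{x\in\Pi}z^{\Gamma_{new}}(x)=z^{\Gamma}(\check\ell).$$
   Context: For a decorated tree $G$ (vertex set $\mathcal V(G)$, integer decorations $e_v$, genera zero, negative definite form on $L(G)=\mathbb Z\langle E_v\rangle$ with $(E_v,E_v)=e_v$, $(E_v,E_w)=1$ for adjacent $v\ne w$, $0$ otherwise) let $L'(G)=\{l'\in L(G)\otimes\mathbb Q:(l',L(G))\subset\mathbb Z\}$, $E_v^*$ with $(E_v^*,E_w)=-\delta_{vw}$, $\delta_v$ the valency, $E^G=\sum E_v$, $Z_K^G$ with $(Z_K^G,E_v)=e_v+2$, $\chi(l')=-(l',l'-Z_K^G)/2$; $\ge$ coordinatewise, $\prec$ strict in all coordinates, $l>0$ if $l\ge0,l\ne0$. $Z^G(\mathbf t)=\sum_{l'}z^G(l')\mathbf t^{l'}$ is the Taylor expansion at $0$ of $\prod_v(1-\mathbf t^{E_v^*})^{\delta_v-2}$ ($\mathbf t^{l'}=\prod t_v^{l'_v}$). The set of dual exponents is $Supp(\check P_0^G)=\{Z^G_K-E^G-\ell:\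 \ell\in L(G),\ \ell\not\prec0,\ z^G(Z^G_K-E^G-\ell)\ne0\}$. $G$ is elliptic if $e_v\le-2$ for all $v$ and $\min_{l\in L(G),l>0}\chi(l)=0$. An end-vertex of $\Gamma$ is a vertex of valency 1 in $\Gamma$. For a connected full subgraph $\Gamma'\subset\Gamma''$, $\check\pi_{(\Gamma',\Gamma'')}(x)=Z_K^{\Gamma'}-E^{\Gamma'}-(Z_K^{\Gamma''}-E^{\Gamma''}-x)|_{\Gamma'}$, where $|_{\Gamma'}$ restricts coefficients to vertices of $\Gamma'$. *)

(* Defs.v *)
From HB Require Import structures.
From mathcomp Require Import all_boot all_order all_algebra.
From Stdlib Require Import ClassicalEpsilon.
Set Implicit Arguments. Unset Strict Implicit. Unset Printing Implicit Defensive.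
Import Order.TTheory GRing.Theory Num.Theory.
Local Open Scope ring_scope.

(* A decorated graph: finite vertex type V, adjacency relation adj,
   integer decorations e (all genera are zero). Vectors of L(G) (x) Q are
   finite functions V -> rat, written in the basis (E_v)_v. *)
Section DecoratedGraph.
Variables (V : finType) (adj : rel V) (e : V -> int).

Definition valency (v : V) : nat := #|[set w | adj v w]|.

(* simple tree: nonempty, symmetric irreflexive, connected, #|E| = #|V|-1
   (edges counted as ordered pairs, hence 2(#|V|-1)) *)
Definition is_tree : Prop :=
  [/\ (0 < #|V|)%N, symmetric adj, irreflexive adj,
      (forall x y, connect adj x y) &
      #|[set p : V * V | adj p.1 p.2]| = (2 * (#|V| - 1))%N].

Definition imat (v w : V) : rat :=
  if v == w then (e v)%:~R else if adj v w then 1 else 0.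

Definition form (x y : {ffun V -> rat}) : rat :=
  \sum_(v : V) \sum_(w : V) x v * imat v w * y w.

Definition basisE (w : V) : {ffun V -> rat} := [ffun u => (u == w)%:R].

Definition neg_def : Prop :=
  forall x : {ffun V -> rat}, x != [ffun => 0] -> form x x < 0.

(* the (unique, under neg_def) x with (x, E_w) = c w for all w *)
Definition dual_sol (c : V -> rat) : {ffun V -> rat} :=
  epsilon (inhabits [ffun => 0]) (fun x => forall w, form x (basisE w) = c w).

Definition Estar (v : V) : {ffun V -> rat} := dual_sol (fun w => - (v == w)%:R).

Definition ZK : {ffun V -> rat} := dual_sol (fun w => (e w)%:~R + 2).

Definition chi (x : {ffun V -> rat}) : rat :=
  - form x [ffun u => x u - ZK u] / 2.

Definition latv (l : {ffun V -> int}) : {ffun V -> rat} := [ffun v => (l v)%:~R].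

Definition decorated_tree : Prop := is_tree /\ neg_def.

Definition elliptic : Prop :=
  [/\ decorated_tree,
      (forall v, e v <= -2),
      (exists l : {ffun V -> int},
          [/\ (forall v, 0 <= l v), (exists v, l v != 0) & chi (latv l) = 0]) &
      (forall l : {ffun V -> int}, (forall v, 0 <= l v) -> (exists v, l v != 0) ->
          0 <= chi (latv l))].

(* coefficient of x^k in (1 - x)^n, n integer *)
Definition binc (n : int) (k : nat) : rat :=
  match n with
  | Posz m => (-1) ^+ k * ('C(m, k))%:R
  | Negz m => ('C(m + k, k))%:R   (* n = -(m+1) *)
  end.

(* Taylor coefficient z(x) of prod_v (1 - t^{Estar_v})^{delta_v - 2}:
   sum over k : V -> nat with sum_v k_v Estar_v = x of prod_v binc (delta_v-2) k_v.
   Any such k satisfies k_v (Estar_v)_v <= x_v (the Estar_v have positive entries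
   for a negative definite tree), so k_v <= zbound x and the finite sum below
   ranges over all contributing k. *)
Definition zbound (x : {ffun V -> rat}) : nat :=
  (\max_(v : V) absz (Num.floor (x v / Estar v v)))%N.

Definition zcoef (x : {ffun V -> rat}) : rat :=
  \sum_(k : {ffun V -> 'I_(zbound x).+1} |
          [forall w, \sum_(v : V) (k v : nat)%:R * Estar v w == x w])
     \prod_(v : V) binc ((valency v)%:Z - 2) (k v).

Definition inSupp (x : {ffun V -> rat}) : Prop :=
  exists l : {ffun V -> int},
    [/\ (forall v, x v = ZK v - 1 - (l v)%:~R), ~ (forall v, l v < 0) & zcoef x != 0].

End DecoratedGraph.

Definition attach_adj (V : finType) (adj : rel V) (v0 : V) (s : nat) : rel (V + 'I_s) :=
  fun a b => match a, b with
             | inl x, inl y => adj x y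
             | inl x, inr _ => x == v0
             | inr _, inl y => y == v0
             | inr _, inr _ => false
             end.
Arguments attach_adj {V} adj v0 s.

Definition attach_dec (V : finType) (s : nat) (e : V -> int) (f : 'I_s -> int)
  : V + 'I_s -> int :=
  fun a => match a with inl x => e x | inr i => f i end.

Definition check_pi (V : finType) (adj : rel V) (e : V -> int) (v0 : V) (s : nat)
  (f : 'I_s -> int) (x : {ffun (V + 'I_s) -> rat}) : {ffun V -> rat} :=
  [ffun v => ZK adj e v - 1
              - (ZK (attach_adj adj v0 s) (attach_dec e f) (inl v) - 1 - x (inl v))].

(* Main.v *)
Require Import Defs.
From HB Require Import structures.
From mathcomp Require Import all_boot all_order all_algebra.
From mathcomp Require Import ring lra zify.
From Stdlib Require Import ClassicalEpsilon.
Import Order.TTheory GRing.Theory Num.Theory.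
Local Open Scope ring_scope.
Set Implicit Arguments. Unset Strict Implicit. Unset Printing Implicit Defensive.

Section Gen.
Variables (W : finType) (adj : rel W) (e : W -> int).
Hypotheses (adj_sym : symmetric adj) (adj_irr : irreflexive adj) (nd : neg_def adj e).

Definition pair (x : {ffun W -> rat}) (w : W) : rat := \sum_v x v * imat adj e v w.

Lemma form_basis x w : Defs.form adj e x (basisE w) = pair x w.
Proof.
rewrite /Defs.form /pair; apply: eq_bigr => v _.
rewrite (bigD1 w) //= ffunE eqxx mulr1 big1 ?addr0 // => u /negbTE Hu.
by rewrite ffunE Hu mulr0.
Qed.

Lemma formE x y : Defs.form adj e x y = \sum_w pair x w * y w.
Proof.
rewrite /Defs.form exchange_big; apply: eq_bigr => w _; rewrite /pair mulr_suml.
by apply: eq_bigr.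
Qed.

Lemma pairB x y w : pair (x - y) w = pair x w - pair y w.
Proof.
rewrite /pair -sumrB; apply: eq_bigr => v _; rewrite !ffunE; ring.
Qed.

Lemma pair_sum (I : Type) (r : seq I) (c : I -> rat) (y : I -> {ffun W -> rat}) w :
  pair [ffun u => \sum_(i <- r) c i * y i u] w = \sum_(i <- r) c i * pair (y i) w.
Proof.
rewrite /pair.
under eq_bigr do rewrite ffunE mulr_suml.
rewrite exchange_big; apply: eq_bigr => i _; rewrite mulr_sumr.
by apply: eq_bigr => v _; rewrite mulrA.
Qed.

Lemma pair_inj x y : (forall w, pair x w = pair y w) -> x = y.
Proof.
move=> H; apply/eqP; rewrite -subr_eq0; apply/eqP.
have Hd w : pair (x - y) w = 0 by rewrite pairB H subrr.
have F0 : Defs.form adj e (x - y) (x - y) = 0.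
  by rewrite formE big1 // => w _; rewrite Hd mul0r.
case: (boolP ((x - y) == [ffun => 0])) => [/eqP ->|Hn].
  by apply/ffunP => v; rewrite !ffunE.
by have := nd Hn; rewrite F0 ltxx.
Qed.

Lemma pair0 w : pair [ffun => 0] w = 0.
Proof. by rewrite /pair big1 // => v _; rewrite ffunE mul0r. Qed.

Lemma pair_surj (c : W -> rat) : exists x, forall w, pair x w = c w.
Proof.
pose A : 'M[rat]_#|W| := \matrix_(i, j) imat adj e (enum_val i) (enum_val j).
pose tox (r : 'rV[rat]_#|W|) : {ffun W -> rat} := [ffun v => r 0 (enum_rank v)].
have key r j : (r *m A) 0 j = pair (tox r) (enum_val j).
  rewrite !mxE /pair (reindex (@enum_val W predT)); last first.
    by apply: onW_bij; apply: enum_val_bij.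
  by apply: eq_bigr => i _; rewrite ffunE enum_valK mxE.
have uA : A \in unitmx.
  rewrite -row_free_unit; apply: inj_row_free => v Hv.
  have H0 : tox v = [ffun => 0].
    apply: pair_inj => w; rewrite pair0 -(enum_rankK w) -key Hv mxE //.
  apply/matrixP => i j; rewrite (ord1 i) mxE.
  by have := congr1 (fun f : {ffun W -> rat} => f (enum_val j)) H0; rewrite !ffunE enum_valK.
pose cr : 'rV[rat]_#|W| := \row_j c (enum_val j).
exists (tox (cr *m invmx A)) => w.
by rewrite -(enum_rankK w) -key mulmxKV // mxE.
Qed.

Lemma dual_solP c w : pair (dual_sol adj e c) w = c w.
Proof.
rewrite /dual_sol.
set P := (fun x : {ffun W -> rat} => forall w, Defs.form adj e x (basisE w) = c w).
have : P (epsilon (inhabits [ffun => 0]) P).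
  apply: epsilon_spec; have [x Hx] := pair_surj c; exists x => u.
  by rewrite form_basis.
by move=> /(_ w); rewrite form_basis.
Qed.

Lemma EstarP v w : pair (Estar adj e v) w = - (v == w)%:R.
Proof. exact: dual_solP. Qed.

Lemma ZKP w : pair (ZK adj e) w = (e w)%:~R + 2.
Proof. exact: dual_solP. Qed.

Lemma decomp x : x = [ffun u => \sum_w (- pair x w) * Estar adj e w u].
Proof.
apply: pair_inj => u; rewrite pair_sum (bigD1 u) //= big1 ?addr0.
  by rewrite EstarP eqxx mulrN1 opprK.
by move=> w /negbTE Hw; rewrite EstarP Hw oppr0 mulr0.
Qed.

Lemma imat_sym v w : imat adj e v w = imat adj e w v.
Proof. by rewrite /imat eq_sym adj_sym; case: eqP => // ->. Qed.

Lemma imat_ge0 v w : v != w -> 0 <= imat adj e v w.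
Proof. by rewrite /imat => /negbTE ->; case: ifP. Qed.

Lemma formBr x y z : Defs.form adj e x (y - z) = Defs.form adj e x y - Defs.form adj e x z.
Proof. rewrite !formE -sumrB; apply: eq_bigr => w _; rewrite !ffunE; ring. Qed.

Lemma form_l x y : Defs.form adj e x y = \sum_a x a * pair y a.
Proof.
rewrite /Defs.form; apply: eq_bigr => a _; rewrite /pair mulr_sumr.
by apply: eq_bigr => b _; rewrite imat_sym; ring.
Qed.

Lemma Estar_ge0 v u : 0 <= Estar adj e v u.
Proof.
set y := Estar adj e v.
pose N : {ffun W -> rat} := [ffun a => if y a < 0 then - y a else 0].
pose P : {ffun W -> rat} := [ffun a => if y a < 0 then 0 else y a].
have yPN : y = P - N.
  by apply/ffunP => a; rewrite !ffunE; case: ifP => _; rewrite ?opprK ?add0r ?subr0.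
have h1 : Defs.form adj e N y <= 0.
  rewrite form_l (bigD1 v) //= big1 ?addr0.
    rewrite EstarP eqxx mulrN1 oppr_le0 ffunE; case: ifP => //.
    by rewrite oppr_ge0 => /ltW.
  by move=> a /negbTE Ha; rewrite EstarP eq_sym Ha oppr0 mulr0.
have h2 : 0 <= Defs.form adj e N P.
  rewrite /Defs.form; apply: sumr_ge0 => a _; apply: sumr_ge0 => b _.
  case: (eqVneq a b) => [<-|hab].
    by rewrite !ffunE; case: ifP => _; rewrite ?mulr0 ?mul0r.
  rewrite !ffunE; apply: mulr_ge0; first apply: mulr_ge0.
  - by case: ifP => // /ltW; rewrite oppr_ge0.
  - exact: imat_ge0.
  - by case: ifP => //; rewrite ltNge => /negbFE.
have h3 : Defs.form adj e N N >= 0.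
  have : Defs.form adj e N y = Defs.form adj e N P - Defs.form adj e N N.
    by rewrite {1}yPN formBr.
  move=> E; move: h1 h2; rewrite E; lra.
case: (boolP (N == [ffun => 0])) => [/eqP HN|HN]; last first.
  by have := nd HN; rewrite ltNge h3.
have := congr1 (fun f : {ffun W -> rat} => f u) HN; rewrite !ffunE.
case: (boolP (y u < 0)) => [hlt|]; last by rewrite -leNgt.
move/eqP; rewrite oppr_eq0 => /eqP h0; by move: hlt; rewrite h0 ltxx.
Qed.

Lemma Estar_diag v : 0 < Estar adj e v v.
Proof.
set y := Estar adj e v.
have F : Defs.form adj e y y = - y v.
  rewrite formE (bigD1 v) //= big1 ?addr0.
    by rewrite EstarP eqxx mulN1r.
  by move=> a /negbTE Ha; rewrite EstarP eq_sym Ha oppr0 mul0r.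
have Hn : y != [ffun => 0].
  apply/eqP => H; have := EstarP v v; rewrite -/y H pair0 eqxx => /eqP.
  by rewrite eq_sym oppr_eq0 oner_eq0.
have := nd Hn; rewrite F oppr_lt0.
by [].
Qed.

Lemma zbound_ge (x : {ffun W -> rat}) u (n : nat) : (forall v, 0 <= Estar adj e v u) ->
  (n%:R * Estar adj e u u <= x u)%R -> (n <= zbound adj e x)%N.
Proof.
move=> _ H.
have H1 : (n%:R <= x u / Estar adj e u u)%R by rewrite ler_pdivlMr // Estar_diag.
have H2 : (n%:Z <= Num.floor (x u / Estar adj e u u))%R by rewrite floor_ge_int.
apply: leq_trans (leq_bigmax u).
lia.
Qed.

Definition binc' (n k : int) : rat := if k < 0 then 0 else binc n (absz k).

Lemma zcoefE (x : {ffun W -> rat}) (kz : W -> int) : (forall w, - pair x w = (kz w)%:~R) ->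
  zcoef adj e x = \prod_w binc' ((valency adj w)%:Z - 2) (kz w).
Proof.
move=> Hk.
have Hx : x = [ffun u => \sum_w (kz w)%:~R * Estar adj e w u].
  by rewrite {1}(decomp x); apply/ffunP => u; rewrite !ffunE; apply: eq_bigr => w _; rewrite Hk.
have cond (k : W -> nat) :
    (forall w, \sum_v (k v)%:R * Estar adj e v w = x w) -> forall v, kz v = (k v)%:Z.
  move=> H v.
  have E : x = [ffun u => \sum_w (k w : nat)%:R * Estar adj e w u].
    by apply/ffunP => u; rewrite ffunE H.
  have := Hk v; rewrite E pair_sum (bigD1 v) //= big1 ?addr0.
    rewrite EstarP eqxx mulrN1 opprK => /eqP; rewrite -[(k v)%:R]/((k v)%:Z%:~R).
    by rewrite eqr_int => /eqP.
  by move=> w /negbTE Hw; rewrite EstarP Hw oppr0 mulr0.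
case: (boolP [forall v, 0 <= kz v]) => [/forallP Hpos|]; last first.
  rewrite negb_forall => /existsP [w Hw].
  rewrite (bigD1 w) //= {1}/binc' ltNge (negbTE Hw) /= mul0r.
  rewrite /zcoef big1 // => k /forallP H.
  have := cond (fun v => k v : nat) (fun w => eqP (H w)) w => Ew; by move: Hw; rewrite Ew.
pose n v := absz (kz v).
have Hn v : kz v = (n v)%:Z by rewrite /n gez0_abs // Hpos.
have Hb v : (n v < (zbound adj e x).+1)%N.
  rewrite ltnS; apply: zbound_ge => [w|]; first exact: Estar_ge0.
  rewrite Hx ffunE (bigD1 v) //= -[X in (X <= _)%R]addr0 lerD //.
    by rewrite Hn.
  apply: sumr_ge0 => w _; apply: mulr_ge0; last exact: Estar_ge0.
  by rewrite ler0z.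
pose k0 : {ffun W -> 'I_(zbound adj e x).+1} := [ffun v => inord (n v)].
rewrite /zcoef (big_pred1 k0).
  apply: eq_bigr => v _; rewrite /binc' Hn ffunE inordK //.
move=> k /=; apply/forallP/eqP => [H|->] .
  apply/ffunP => v; apply: val_inj; rewrite ffunE /= inordK //.
  by have := cond (fun v => k v : nat) (fun w => eqP (H w)) v; rewrite Hn => [[]].
move=> w; apply/eqP; rewrite [in RHS]Hx ffunE; apply: eq_bigr => v _.
by rewrite ffunE inordK // Hn.
Qed.

Definition iimat v w : int := if v == w then e v else if adj v w then 1 else 0.
Lemma imatE v w : imat adj e v w = (iimat v w)%:~R.
Proof. by rewrite /imat /iimat; case: eqP => //; case: adj. Qed.

Definition kz (L : {ffun W -> int}) w : int := (valency adj w)%:Z - 2 + \sum_v L v * iimat v w.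

Lemma pair_one w : pair [ffun _ => 1] w = (e w)%:~R + (valency adj w)%:R.
Proof.
have -> : (valency adj w)%:R = \sum_v ((adj w v)%:R : rat).
  rewrite /valency -sum1_card natr_sum big_mkcond /=; apply: eq_bigr => v _.
  by rewrite inE; case: adj.
have -> : (e w)%:~R = \sum_v ((v == w)%:R * (e w)%:~R : rat).
  by rewrite (bigD1 w) //= eqxx mul1r big1 ?addr0 // => v /negbTE ->; rewrite mul0r.
rewrite -big_split /pair; apply: eq_bigr => v _; rewrite ffunE mul1r /imat.
case: eqP => [->|/eqP Hv] /=; first by rewrite adj_irr /= mul1r addr0.
by rewrite mul0r add0r adj_sym; case: adj.
Qed.

Lemma pair_lat (L : {ffun W -> int}) w : pair (latv L) w = (\sum_v L v * iimat v w)%:~R.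
Proof.
rewrite /pair rmorph_sum; apply: eq_bigr => v _.
by rewrite ffunE imatE -intrM.
Qed.

Lemma kzP (x : {ffun W -> rat}) (L : {ffun W -> int}) : (forall v, x v = ZK adj e v - 1 - (L v)%:~R) ->
  forall w, - pair x w = (kz L w)%:~R.
Proof.
move=> H w.
have -> : x = ZK adj e - [ffun _ => 1] - latv L.
  by apply/ffunP => v; rewrite H !ffunE.
rewrite !pairB ZKP pair_one pair_lat /kz intrD intrB.
rewrite -[((valency adj w)%:Z)%:~R]/((valency adj w)%:R : rat).
ring.
Qed.

Lemma zcoef_kz (x : {ffun W -> rat}) (L : {ffun W -> int}) : (forall v, x v = ZK adj e v - 1 - (L v)%:~R) ->
  zcoef adj e x = \prod_w binc' ((valency adj w)%:Z - 2) (kz L w).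
Proof. by move=> H; apply: zcoefE; apply: kzP. Qed.

End Gen.
Lemma coef1X n k : ((1 - 'X)^+n : {poly rat})`_k = binc (Posz n) k.
Proof.
elim: n k => [|n IH] k.
  rewrite expr0 coefC /=; case: k => [|k] /=; first by rewrite expr0 mul1r.
  by rewrite bin0n mulr0.
rewrite exprSr mulrBr mulr1 coefB coefMX IH /=.
case: k => [|k] /=; first by rewrite !expr0 !bin0 subr0.
rewrite IH /= binS natrD exprS; ring.
Qed.

Lemma one_sub_pow (p : {poly rat}) n : exists R, (1 - p)^+n = 1 + p * R.
Proof.
elim: n => [|n [R HR]]; first by exists 0; rewrite expr0 mulr0 addr0.
exists (R - 1 - p * R); rewrite exprSr HR; ring.
Qed.

Lemma comb (s B A : nat) : (0 < s)%N -> (A < B)%N ->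
  \sum_(j : {ffun 'I_s -> 'I_B}) (if (A < \sum_i (j i : nat))%N then 0
       else binc (Posz (s - 1)) (A - \sum_i (j i : nat))%N) = 1 :> rat.
Proof.
move=> s0 AB.
pose Q : {poly rat} := (1 - 'X)^+(s - 1).
pose G : {poly rat} := \sum_(b < B) 'X^b.
have E1 (j : {ffun 'I_s -> 'I_B}) : (if (A < \sum_i (j i : nat))%N then 0
       else binc (Posz (s - 1)) (A - \sum_i (j i : nat))%N) = (Q * \prod_i 'X^(j i))`_A.
  rewrite -(big_morph (fun n => 'X^n) (@exprD _ 'X) (expr0 'X)) coefMXn.
  by case: ifP => //; rewrite coef1X.
under eq_bigr do rewrite E1.
rewrite -coef_sum -mulr_sumr -(bigA_distr_bigA (fun (i : 'I_s) (b : 'I_B) => ('X^b : {poly rat}))).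
have -> : \prod_(i < s) \sum_(j < B) ('X^j : {poly rat}) = G ^+ s by rewrite prodr_const card_ord.
have HG : (1 - 'X) * G = 1 - 'X^B.
  have := subrX1 ('X : {poly rat}) B; rewrite -/G => H.
  by rewrite -[1 - 'X]opprB mulNr -H opprB.
have -> : Q * G ^+ s = G * (1 - 'X^B)^+(s - 1).
  have Hs : G ^+ s = G * G ^+ (s - 1) by rewrite -exprS; congr (_ ^+ _); lia.
  rewrite -HG exprMn /Q Hs; ring.
have [R ->] := one_sub_pow ('X^B) (s - 1).
rewrite mulrDr mulr1 coefD mulrCA coefXnM AB addr0.
rewrite /G coef_sum (bigD1 (Ordinal AB)) //= coefXn eqxx big1 ?addr0 //.
move=> i /eqP Hi; rewrite coefXn; case: eqP => // HA; case: Hi; apply: val_inj => /=.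
by rewrite HA.
Qed.
Lemma valencyE (W : finType) (r : rel W) a : valency r a = (\sum_b (r a b : nat))%N.
Proof.
rewrite /valency -sum1_card big_mkcond /=; apply: eq_bigr => b _.
by rewrite inE; case: r.
Qed.

Lemma inr_eq (A B : finType) (a b : B) : (inr a == inr b :> A + B) = (a == b). Proof. by []. Qed.
Lemma inl_eq (A B : finType) (a b : A) : (inl a == inl b :> A + B) = (a == b). Proof. by []. Qed.

Section Attach.
Variables (V : finType) (adj : rel V) (e : V -> int) (v0 : V) (s : nat) (f : 'I_s -> int).
Notation adj' := (attach_adj adj v0 s).
Notation e' := (attach_dec e f).

Lemma val_inl w : valency adj' (inl w) = (valency adj w + (w == v0) * s)%N.
Proof.
rewrite !valencyE big_sumType /=; congr (_ + _)%N.
by rewrite sum_nat_const card_ord mulnC.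
Qed.

Lemma val_inr i : valency adj' (inr i) = 1%N.
Proof.
rewrite valencyE big_sumType /= [X in (_ + X)%N]big1 ?addn0 //.
by rewrite (bigD1 v0) //= eqxx big1 // => y /negbTE ->.
Qed.

Lemma kz_inl (L' : {ffun V + 'I_s -> int}) w :
  kz adj' e' L' (inl w) = kz adj e [ffun v => L' (inl v)] w
     + (w == v0)%:R * (s%:Z + \sum_i L' (inr i)).
Proof.
rewrite /kz val_inl big_sumType /=.
have -> : \sum_i L' (inr i) * iimat adj' e' (inr i) (inl w) = (w == v0)%:R * \sum_i L' (inr i).
  rewrite mulr_sumr; apply: eq_bigr => i _; rewrite /iimat /=.
  by case: (w == v0); rewrite ?mulr1 ?mul1r ?mulr0 ?mul0r.
have -> : \sum_i L' (inl i) * iimat adj' e' (inl i) (inl w) =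
          \sum_v [ffun v => L' (inl v)] v * iimat adj e v w.
  by apply: eq_bigr => v _; rewrite ffunE.
case: (w == v0); rewrite /= ?muln1 ?muln0 ?addn0 ?mul1r ?mul0r ?addr0 //.
rewrite PoszD; ring.
Qed.

Lemma kz_inr (L' : {ffun V + 'I_s -> int}) i :
  kz adj' e' L' (inr i) = -1 + L' (inl v0) + L' (inr i) * f i.
Proof.
rewrite /kz val_inr big_sumType /=.
rewrite (bigD1 v0) //= big1 ?addr0; last first.
  by move=> v /negbTE Hv; rewrite /iimat /= Hv mulr0.
rewrite (bigD1 i) //= big1 ?addr0; last first.
  by move=> j /negbTE Hj; rewrite /iimat /= inr_eq Hj mulr0.
rewrite /iimat /= inr_eq !eqxx; ring.
Qed.

End Attach.
Lemma PoszSum (I : finType) (F : I -> nat) : ((\sum_i F i)%N : int) = \sum_i (F i : int).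
Proof. by elim/big_rec2: _ => // i x y _ <-; rewrite PoszD. Qed.

Section Main.
Variables (V : finType) (adj : rel V) (e : V -> int) (v0 : V) (s : nat) (f : 'I_s -> int).
Notation adj' := (attach_adj adj v0 s).
Notation e' := (attach_dec e f).
Hypotheses (sym : symmetric adj) (irr : irreflexive adj) (nd : neg_def adj e).
Hypotheses (sym' : symmetric adj') (irr' : irreflexive adj') (nd' : neg_def adj' e').
Hypotheses (hv0 : valency adj v0 = 1%N) (hs : (0 < s)%N).

Definition Pp (L : {ffun V -> int}) :=
  \prod_(w | w != v0) binc' ((valency adj w)%:Z - 2) (kz adj e L w).

Lemma zcoef_old (L : {ffun V -> int}) (x : {ffun V -> rat}) :
  (forall v, x v = ZK adj e v - 1 - (L v)%:~R) ->
  zcoef adj e x = binc' (-1) (kz adj e L v0) * Pp L.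
Proof.
move=> hx; rewrite (zcoef_kz sym irr nd hx) (bigD1 v0) //= hv0.
by [].
Qed.

Lemma zcoef_new (L : {ffun V -> int}) (L' : {ffun V + 'I_s -> int}) (x : {ffun V + 'I_s -> rat}) :
  (forall v, L' (inl v) = L v) ->
  (forall b, x b = ZK adj' e' b - 1 - (L' b)%:~R) ->
  zcoef adj' e' x = binc' (Posz (s - 1)) (kz adj e L v0 + s%:Z + \sum_i L' (inr i)) * Pp L
     * \prod_i binc' (-1) (-1 + L v0 + L' (inr i) * f i).
Proof.
move=> hL hx.
have eL : [ffun v => L' (inl v)] = L by apply/ffunP => v; rewrite ffunE hL.
rewrite (zcoef_kz sym' irr' nd' hx) big_sumType /= (bigD1 v0) //=.
rewrite kz_inl val_inl eL eqxx mul1r hv0.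
have -> : ((1 + 1 * s)%N%:Z - 2) = Posz (s - 1) by lia.
congr (_ * _ * _).
- by rewrite /kz !addrA.
- apply: eq_bigr => w /negbTE hw.
  by rewrite kz_inl val_inl eL hw mul0r addr0 mul0n addn0.
- by apply: eq_bigr => i _; rewrite val_inr kz_inr hL.
Qed.

Lemma binc'_m1 k : 0 <= k -> binc' (-1) k = 1.
Proof. by move=> hk; rewrite /binc' ltNge hk /= add0n binn. Qed.

Lemma binc'_conv n (A J : nat) : binc' n (A%:Z - J%:Z) = if (A < J)%N then 0 else binc n (A - J)%N.
Proof.
rewrite /binc'; case: ltnP => h.
  by have -> : (A%:Z - J%:Z < 0) = true by apply/idP; lia.
have -> : (A%:Z - J%:Z < 0) = false by apply/negbTE; lia.
congr binc; lia.
Qed.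

Lemma main_sec (L : {ffun V -> int}) (l : {ffun V -> rat}) :
  (forall v, l v = ZK adj e v - 1 - (L v)%:~R) -> ~ (forall v, L v < 0) -> zcoef adj e l != 0 ->
  (forall i, f i <= -2) ->
  (exists x, inSupp adj' e' x /\ check_pi adj e v0 f x = l) ->
  exists S : seq {ffun (V + 'I_s) -> rat},
    [/\ uniq S,
        (forall x, x \in S <-> (inSupp adj' e' x /\ check_pi adj e v0 f x = l)) &
        \sum_(x <- S) zcoef adj' e' x = zcoef adj e l].
Proof.
move=> hl hLneg hzl hf [x0 [[L0 [hx0 hL0neg hzx0]] hpi0]].
set m := kz adj e L v0.
have HzL := zcoef_old hl; rewrite -/m in HzL.
have Hm : 0 <= m.
  rewrite leNgt; apply/negP => hm; move: hzl; rewrite HzL /binc' hm mul0r eqxx.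
  by [].
have HzL' : zcoef adj e l = Pp L by rewrite HzL binc'_m1 // mul1r.
pose a := L v0.
have hc i : 0 < - f i by have := hf i; lia.
pose N i := ((a - 1) %/ (- f i))%Z.
have ext (x : {ffun V + 'I_s -> rat}) (L' : {ffun V + 'I_s -> int}) :
    (forall b, x b = ZK adj' e' b - 1 - (L' b)%:~R) -> check_pi adj e v0 f x = l ->
    forall v, L' (inl v) = L v.
  move=> hx hpi v; have := congr1 (fun g : {ffun V -> rat} => g v) hpi.
  rewrite ffunE hx hl => H.
  have : (L' (inl v))%:~R = (L v)%:~R :> rat by move: H; lra.
  by move/eqP; rewrite eqr_int => /eqP.
have nz (x : {ffun V + 'I_s -> rat}) (L' : {ffun V + 'I_s -> int}) :
    (forall v, L' (inl v) = L v) ->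
    (forall b, x b = ZK adj' e' b - 1 - (L' b)%:~R) -> zcoef adj' e' x != 0 ->
    0 <= m + s%:Z + \sum_i L' (inr i) /\ forall i, L' (inr i) <= N i.
  move=> hL hx; rewrite (zcoef_new hL hx) !mulf_eq0 !negb_or => /andP [/andP [h1 _] h3].
  split.
    by move: h1; rewrite /binc'; case: ltP => //; rewrite eqxx.
  move=> i; move/prodf_neq0: h3 => /(_ i isT).
  rewrite /binc'; case: ltP => [|h _]; first by rewrite eqxx.
  rewrite /N lez_divRL //; rewrite /a; lia.
have hext0 := ext x0 L0 hx0 hpi0.
have [h01 h02] := nz x0 L0 hext0 hx0 hzx0.
pose A := m + s%:Z + \sum_i N i.
have HA : 0 <= A.
  apply: le_trans h01 _; rewrite /A lerD2l; apply: ler_sum => i _; exact: h02.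
pose B := (absz A).+1.
pose T := {ffun 'I_s -> 'I_B}.
pose Lext (j : T) : {ffun V + 'I_s -> int} :=
  [ffun b => match b with inl v => L v | inr i => N i - (j i : nat)%:Z end].
pose phi (j : T) : {ffun V + 'I_s -> rat} := [ffun b => ZK adj' e' b - 1 - (Lext j b)%:~R].
have phiE j b : phi j b = ZK adj' e' b - 1 - (Lext j b)%:~R by rewrite ffunE.
have LextL j v : Lext j (inl v) = L v by rewrite ffunE.
have phi_inj : injective phi.
  move=> j1 j2 H; apply/ffunP => i; apply: val_inj.
  have := congr1 (fun g : {ffun V + 'I_s -> rat} => g (inr i)) H; rewrite !phiE !ffunE /= => H'.
  have : ((j1 i : nat)%:Z)%:~R = ((j2 i : nat)%:Z)%:~R :> rat.
    move: H'; rewrite !intrB; lra.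
  by move/eqP; rewrite eqr_int => /eqP [].
have zphi j : zcoef adj' e' (phi j) = binc' (Posz (s - 1)) (A - (\sum_i (j i : nat))%N%:Z) * Pp L.
  rewrite (zcoef_new (L := L) (L' := Lext j)) //.
  rewrite [X in _ * X = _]big1 ?mulr1; last first.
    move=> i _; rewrite binc'_m1 // ffunE.
    have : N i * (- f i) <= a - 1 by rewrite -lez_divRL.
    have : 0 <= ((j i : nat)%:Z) * (- f i) by apply: mulr_ge0 => //; apply: ltW. 
    rewrite /a; lia.
  congr (binc' _ _ * _).
  have -> : \sum_i Lext j (inr i) = \sum_i N i - \sum_i (j i : nat)%:Z.
    by rewrite -sumrB; apply: eq_bigr => i _; rewrite ffunE.
  by rewrite /A -/m PoszSum; ring.
exists [seq phi j | j <- enum [pred j : T | zcoef adj' e' (phi j) != 0]].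
split.
- by rewrite map_inj_uniq // enum_uniq.
- move=> x; split.
    move=> /mapP [j]; rewrite mem_enum inE => hz ->; split.
      exists (Lext j); split => //.
      by move=> hall; apply: hLneg => v; have := hall (inl v); rewrite LextL.
    apply/ffunP => v; rewrite !ffunE /= hl; ring.
  move=> [[L' [hx _ hz]] hpi].
  have hext := ext x L' hx hpi.
  have [h1 h2] := nz x L' hext hx hz.
  have hle i : N i - L' (inr i) <= A.
    have : \sum_k (N k - L' (inr k)) <= A.
      rewrite sumrB /A -subr_ge0.
      by rewrite (_ : _ - _ = m + s%:Z + \sum_i L' (inr i)) //; ring.
    apply: le_trans; rewrite (bigD1 i) //= lerDl; apply: sumr_ge0 => k _.
    by rewrite subr_ge0 h2.
  pose jf : T := [ffun i => inord (absz (N i - L' (inr i)))].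
  have Hx : x = phi jf.
    apply/ffunP => b; rewrite phiE hx; case: b => [v|i] /=; first by rewrite ffunE hext.
    have h0 : 0 <= N i - L' (inr i) by rewrite subr_ge0.
    rewrite !ffunE inordK; last first.
      by rewrite /B ltnS -lez_nat !gez0_abs // hle.
    congr (_ - _%:~R); rewrite gez0_abs //; ring.
  apply/mapP; exists jf => //; rewrite mem_enum inE -Hx //.
- rewrite big_map big_enum /= HzL' big_mkcond /=.
  rewrite (eq_bigr (fun j => zcoef adj' e' (phi j))); last first.
    by move=> j _; rewrite inE; case: eqP.
  under eq_bigr do rewrite zphi.
  rewrite -mulr_suml -[X in _ = X]mul1r; congr (_ * _).
  have eA : A = Posz (absz A) by rewrite gez0_abs.
  under eq_bigr do rewrite eA binc'_conv.
  exact: comb.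
Qed.


End Main.

Unset Implicit Arguments.
Set Strict Implicit.

Theorem mainTheorem6 (V : finType) (adj : rel V) (e : V -> int) (v0 : V)
  (s : nat) (f : 'I_s -> int) (l : {ffun V -> rat}) :
  elliptic adj e ->
  valency adj v0 = 1%N ->
  (0 < s)%N ->
  elliptic (attach_adj adj v0 s) (attach_dec e f) ->
  inSupp adj e l ->
  (exists x, inSupp (attach_adj adj v0 s) (attach_dec e f) x
             /\ check_pi adj e v0 f x = l) ->
  exists S : seq {ffun (V + 'I_s) -> rat},
    [/\ uniq S,
        (forall x, x \in S <-> (inSupp (attach_adj adj v0 s) (attach_dec e f) x
                                /\ check_pi adj e v0 f x = l)) &
        \sum_(x <- S) zcoef (attach_adj adj v0 s) (attach_dec e f) x = zcoef adj e l].
Proof.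
move=> [[[_ sym irr _ _] nd] _ _ _] hv0 hs [[[_ sym' irr' _ _] nd'] hle' _ _] [L [hl hLneg hzl]] hex.
apply: (main_sec sym irr nd sym' irr' nd' hv0 hs hl hLneg hzl _ hex).
by move=> i; exact: (hle' (inr i)).
Qed.
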